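(* There is an infinite family of undirected graphs (with positive edge lengths) such that, with $n$ the number of vertices, the weighted greedy algorithm w-HHL finds a hierarchical hub labeling of size $\Omega(n^{4/3})$ while the optimal hierarchical hub labeling has size $O(n)$.
   Context: For an undirected graph $G=(V,E)$ with edge lengths, $n=|V|$, a hub labeling assigns to each $v$ a label $L(v)\subseteq V$ such that for every pair $u,w$, $L(u)\cap L(w)$ contains a vertex on some shortest $u$–$w$ path; its size is $\sum_v|L(v)|$. It is hierarchical (HHL) if there is a bijection $\pi:V\to\{1,\dots,n\}$ with $u\in L(v)\Rightarrow\pi(u)\le\pi(v)$. w-HHL: start with empty labels; an unordered pair $[u,w]$ (including $u=w$) is uncovered if $L(u)\cap L(w)$ has no vertex on a shortest $u$–$w$ path. For each not-yet-selected vertex $v$, the center graph is the graph on $V$ with an edge (self-loop if $u=w$) $\{u,w\}$ for each uncovered pair having a shortest $u$–$w$ path through $v$, with isolated vertices deleted. Each iteration selects a not-yet-selected $v$ whose center graph has maximum density (edges divided by vertices) and adds $v$ to $L(u)$ for every vertex $u$ of that center graph, until all pairs are covered. *)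

(* Defs.v *)
From mathcomp Require Import all_boot all_order all_algebra.
From mathcomp Require Import boolp.
Set Implicit Arguments.
Unset Strict Implicit.
Unset Printing Implicit Defensive.
Import Order.TTheory GRing.Theory Num.Theory.
Local Open Scope ring_scope.

Record wgraph (n : nat) := WGraph {
  adj : rel 'I_n;
  wt  : 'I_n -> 'I_n -> rat  (* length of edge {u,v} (meaningful when adj u v) *)
}.

Definition wf_graph n (G : wgraph n) : Prop :=
  [/\ forall u v, adj G u v = adj G v u,
      forall u v, wt G u v = wt G v u,
      forall u, ~~ adj G u u
    & forall u v, adj G u v -> 0 < wt G u v].

Fixpoint plen n (G : wgraph n) (x : 'I_n) (p : seq 'I_n) : rat :=
  match p with
  | [::] => 0
  | y :: q => wt G x y + plen G y q
  end.

(* p is (the tail of) a walk from u to w in G. *)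
Definition walk n (G : wgraph n) (u w : 'I_n) (p : seq 'I_n) : Prop :=
  path (adj G) u p /\ last u p = w.

Definition connected_graph n (G : wgraph n) : Prop :=
  forall u w, exists p, walk G u w p.

Definition on_sp n (G : wgraph n) (u v w : 'I_n) : Prop :=
  exists p, [/\ walk G u w p, v \in u :: p &
                forall q, walk G u w q -> plen G u p <= plen G u q].

Definition labeling n := 'I_n -> {set 'I_n}.

Definition covered n (G : wgraph n) (L : labeling n) (u w : 'I_n) : Prop :=
  exists2 x, x \in L u :&: L w & on_sp G u x w.

Definition is_HL n (G : wgraph n) (L : labeling n) : Prop :=
  forall u w, covered G L u w.

Definition is_HHL n (G : wgraph n) (L : labeling n) : Prop :=
  is_HL G L /\
  exists pi : 'I_n -> 'I_n,
    bijective pi /\ forall u v, u \in L v -> (pi u <= pi v)%N.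

Definition hl_size n (L : labeling n) : nat := (\sum_(v : 'I_n) #|L v|)%N.

(* Center graph of v w.r.t. the current labels L: an edge {u,w} (a self-loop
   when u = w) for each uncovered pair having a shortest u--w path through v.
   Unordered pairs are represented by ordered pairs (u,w) with u <= w. *)
Definition cg_edges n (G : wgraph n) (L : labeling n) (v : 'I_n)
  : {set 'I_n * 'I_n} :=
  [set p : 'I_n * 'I_n | (p.1 <= p.2)%N && `[< ~ covered G L p.1 p.2 /\ on_sp G p.1 v p.2 >]].

(* Non-isolated vertices of the center graph. *)
Definition cg_verts n (G : wgraph n) (L : labeling n) (v : 'I_n) : {set 'I_n} :=
  [set u | `[< exists w, ~ covered G L u w /\ on_sp G u v w >]].

(* Density = #edges / #vertices (0 for the empty graph). *)
Definition cg_density n (G : wgraph n) (L : labeling n) (v : 'I_n) : rat :=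
  (#|cg_edges G L v|)%:R / (#|cg_verts G L v|)%:R.

Definition whhl_update n (G : wgraph n) (L : labeling n) (v : 'I_n)
  : labeling n :=
  fun u => if u \in cg_verts G L v then v |: L u else L u.

(* States (L, S) reachable by some execution of w-HHL
   (S = set of already selected vertices); ties are arbitrary. *)
Inductive whhl_reach n (G : wgraph n) : labeling n -> {set 'I_n} -> Prop :=
| whhl_start : whhl_reach G (fun _ => set0) set0
| whhl_step (L : labeling n) (S : {set 'I_n}) (v : 'I_n) :
    whhl_reach G L S ->
    ~ is_HL G L ->
    v \notin S ->
    (forall v', v' \notin S -> cg_density G L v' <= cg_density G L v) ->
    whhl_reach G (whhl_update G L v) (v |: S).

Definition whhl_output n (G : wgraph n) (L : labeling n) : Prop :=
  exists S, whhl_reach G L S /\ is_HL G L.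

(* Main.v *)
Require Import Defs.
From mathcomp Require Import all_boot all_order all_algebra.
From mathcomp Require Import boolp lra zify.
Set Implicit Arguments.
Unset Strict Implicit.
Unset Printing Implicit Defensive.
Import Order.TTheory GRing.Theory Num.Theory.
Local Open Scope ring_scope.

Inductive kind := KT | KG | KB of nat | KC of nat.

Definition dk (a b : kind) : rat :=
  match a, b with
  | KT, KT => 0 | KT, KG | KG, KT => 8 | KT, KB _ | KB _, KT => 12
  | KT, KC _ | KC _, KT => 8
  | KG, KG => 0 | KG, KB _ | KB _, KG => 6 | KG, KC _ | KC _, KG => 9
  | KB i, KB j => if i == j then 0 else 12
  | KB i, KC j | KC j, KB i => if i == j then 4 else 15
  | KC i, KC j => if i == j then 8 else 16
  end.

Definition adjk (a b : kind) : bool :=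
  match a, b with
  | KT, KG | KG, KT | KT, KC _ | KC _, KT | KG, KB _ | KB _, KG
  | KG, KC _ | KC _, KG => true
  | KB i, KC j | KC j, KB i => i == j
  | _, _ => false
  end.

Ltac splitifs := repeat (rewrite ?eqxx; match goal with
 | H : ?a <> ?b |- context [?a == ?b] => rewrite (introF eqP H)
 | H : ?a <> ?b |- context [?b == ?a] => rewrite (introF eqP (nesym H))
 | |- context [?a == ?b] => case: (a =P b) => [?|?]; subst
 end); rewrite ?eqxx.

Lemma dk_tri a b c : dk a c <= dk a b + dk b c.
Proof.
case: a => [||i|i]; case: b => [||j|j]; case: c => [||l|l] /=; splitifs; lra.
Qed.

Lemma dk_sym a b : dk a b = dk b a.
Proof. case: a => [||i|i]; case: b => [||j|j] //=; rewrite eq_sym //. Qed.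

Lemma dk_ge0 a b : 0 <= dk a b.
Proof. case: a => [||i|i]; case: b => [||j|j] /=; splitifs; lra. Qed.

Lemma adjk_sym a b : adjk a b = adjk b a.
Proof. case: a => [||i|i]; case: b => [||j|j] //=; rewrite eq_sym //. Qed.

Lemma adjk_pos a b : adjk a b -> 0 < dk a b.
Proof. case: a => [||i|i]; case: b => [||j|j] /=; splitifs; lra. Qed.

Section Walks.
Variable N : nat.
Variable H : wgraph N.

Lemma plen_cat (u : 'I_N) p q : plen H u (p ++ q) = plen H u p + plen H (last u p) q.
Proof. elim: p u => [|x p IH] u /=; first by rewrite add0r. by rewrite IH addrA. Qed.

Lemma walk_cat (u v w : 'I_N) p q : walk H u v p -> walk H v w q -> walk H u w (p ++ q).
Proof.
case=> hp hl [hq hl']; split; first by rewrite cat_path hp hl hq.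
by rewrite last_cat hl.
Qed.

Lemma walk_split (u w v : 'I_N) p : walk H u w p -> v \in u :: p ->
  exists p1 p2, [/\ walk H u v p1, walk H v w p2 & plen H u p = plen H u p1 + plen H v p2].
Proof.
case=> hp hl; rewrite in_cons; case/orP => [/eqP ->|hv].
  by exists [::], p; split => //=; rewrite add0r.
move: hp hl; case/path.splitP: hv => p1 p2 hp hl.
exists (rcons p1 v), p2; move: hp; rewrite cat_path last_rcons => /andP [h1 h2].
split.
- by split => //; rewrite last_rcons.
- by split => //; rewrite last_cat last_rcons in hl.
- by rewrite plen_cat last_rcons.
Qed.

End Walks.

Definition mk (a b : kind) : kind :=
  match a, b with
  | KT, KB j | KB j, KT => KC j
  | KC i, KC j => if i == j then KB i else KT
  | _, _ => KG
  end.

Definition nd (a b : kind) : bool :=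
  match a, b with KT, KT | KG, KG => false | KB i, KB j => i != j | _, _ => true end.

Lemma mk_ok a b : nd a b -> ~~ adjk a b ->
  [/\ adjk a (mk a b), adjk (mk a b) b & dk a (mk a b) + dk (mk a b) b = dk a b].
Proof.
case: a => [||i|i]; case: b => [||j|j] //=; splitifs => //= *; rewrite ?eqxx //; lra.
Qed.


Definition isB (a : kind) : bool := if a is KB _ then true else false.

Ltac kfinish := move=> *; (try match goal with H : @eq rat _ _ |- _ => exfalso; move: H; clear; lra end); (try by []);
  (try match goal with H : ?x <> ?x |- _ => by case: H end);
  (try (by left)); (try (by right)); (try (by left; split)); (try (by right; split)).

Lemma kl_pos a b : nd a b -> 0 < dk a b.
Proof. case: a => [||i|i]; case: b => [||j|j] //=; splitifs => //= *; lra. Qed.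

Lemma kl_core_pair j c : dk (KC j) c + dk c (KC j) = dk (KC j) (KC j) -> c = KB j.
Proof. case: c => [||i|i] /=; splitifs; kfinish. Qed.

Lemma kl_core_b i j c : dk (KC i) c + dk c (KB j) = dk (KC i) (KB j) -> c <> KB j -> c = KG.
Proof. case: c => [||l|l] /=; splitifs; kfinish. Qed.

Lemma kl_g a b : dk a KG + dk KG b = dk a b -> a <> KG -> b <> KG -> isB a || isB b.
Proof. case: a => [||i|i]; case: b => [||l|l] /=; splitifs; kfinish. Qed.

Lemma kl_b j a b : dk a (KB j) + dk (KB j) b = dk a b -> a <> KB j -> b <> KB j ->
  a = KC j /\ b = KC j.
Proof. case: a => [||i|i]; case: b => [||l|l] /=; splitifs; kfinish. Qed.

Lemma kl_c j a b : dk a (KC j) + dk (KC j) b = dk a b -> a = KT \/ b = KT.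
Proof. case: a => [||i|i]; case: b => [||l|l] /=; splitifs; kfinish. Qed.

Lemma arith_pick ev vb eb vv c nn hh : (ev <= c*vv -> vb <= nn -> hh <= eb -> c*nn < hh -> 0 < vv -> ev*vb < eb*vv)%N.
Proof. move=> h1 h2 h3 h4 h5.
apply: (@leq_ltn_trans (c * vv * nn)).
  by apply: leq_mul.
rewrite -mulnA (mulnC vv) mulnA.
apply: (@leq_trans (hh * vv)); first by rewrite ltn_pmul2r.
by rewrite leq_mul2r h3 orbT.
Qed.

Lemma exists_max (T : finType) (P : pred T) (f : T -> rat) x0 : P x0 ->
  exists x, P x /\ forall y, P y -> f y <= f x.
Proof.
move=> hx0.
have H : forall s : seq T, exists x, x \in x0 :: s /\ forall y, y \in x0 :: s -> f y <= f x.
  elim=> [|a s [x [hx hmax]]].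
    by exists x0; split; rewrite ?mem_head // => y; rewrite inE => /eqP ->.
  case: (leP (f a) (f x)) => ha.
  - exists x; split; first by move: hx; rewrite !inE => /orP [->|->]; rewrite ?orbT.
    move=> y; rewrite !inE => /orP [/eqP ->|/orP [/eqP ->|hy]] //; apply: hmax; rewrite !inE ?eqxx ?hy ?orbT //.
  - exists a; split; first by rewrite !inE eqxx orbT.
    move=> y; rewrite !inE => /orP [/eqP ->|/orP [/eqP ->|hy]] //.
    + apply: le_trans (ltW ha); apply: hmax; exact: mem_head.
    + apply: le_trans (ltW ha); apply: hmax; by rewrite inE hy orbT.
have [x [hx hmax]] := H [seq y <- enum T | P y].
exists x; split.
  by move: hx; rewrite inE mem_filter => /orP [/eqP ->|/andP []].
by move=> y hy; apply: hmax; rewrite inE mem_filter hy mem_enum orbT.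
Qed.

Section Construction.
Variable k : nat.
Hypothesis hk : (3 <= k)%N.

Variable m : nat.
Hypothesis hm16 : m = (16 * k ^ 2)%N.
Definition n := (k + k * m).+2.
Lemma n_eq : n = (k + k * m).+2. Proof. by []. Qed.
Ltac nia' := try clear hm16; nia.
Ltac lia' := have := n_eq; try clear hm16; repeat match goal with H : (_ = false) |- _ => move/negbT: H => H end; lia.

Lemma m_gt0 : (0 < m)%N.
Proof. rewrite hm16; have : (0 < k)%N by lia'. move=> h. rewrite muln_gt0 expn_gt0 h. by []. Qed.

Definition kind_of (i : nat) : kind :=
  if i == 0%N then KT else if i == 1%N then KG
  else if (i < k.+2)%N then KB (i - 2) else KC ((i - k.+2) %/ m).

Definition validk (a : kind) : bool :=
  match a with KB j | KC j => (j < k)%N | _ => true end.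

Definition vok (a : kind) : 'I_n :=
  match a with KT => inord 0 | KG => inord 1 | KB j => inord j.+2
  | KC j => inord (k.+2 + j * m) end.

Lemma kind_vok a : validk a -> kind_of (vok a) = a.
Proof.
have hm := m_gt0.
case: a => [||j|j] /= hj; rewrite /kind_of.
- by rewrite inordK.
- by rewrite inordK.
- rewrite inordK; last by lia'.
  have -> : (j.+2 < k.+2)%N by lia'. by rewrite subn2.
- rewrite inordK; last first.
    have : (j * m < k * m)%N by rewrite ltn_mul2r hm hj.
    lia'.
  have -> : (k.+2 + j * m == 0)%N = false by lia'.
  have -> : (k.+2 + j * m == 1)%N = false by lia'.
  have -> : (k.+2 + j * m < k.+2)%N = false by lia'.
  by rewrite addKn mulnK.
Qed.

Lemma valid_kind (u : 'I_n) : validk (kind_of u).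
Proof.
have hm := m_gt0. have hu := ltn_ord u.
rewrite /kind_of. case: ifP => // _. case: ifP => // _. case: ifP => h /=.
- lia'.
- have h' : (k.+2 <= u)%N by rewrite leqNgt h.
  rewrite ltn_divLR //. lia'.
Qed.

Lemma kind_eq_vok (u : 'I_n) a : kind_of u = a -> (a = KT \/ a = KG \/ exists j, a = KB j) ->
  u = vok a.
Proof.
move=> <- ha; apply: val_inj => /=.
move: ha; rewrite /kind_of; case: eqP => [-> _|h0]; first by rewrite inordK.
case: eqP => [-> _|h1]; first by rewrite inordK.
case: ifP => h ha.
- rewrite inordK; last by lia'. lia'.
- by case: ha => [e|[e|[j e]]].
Qed.

Definition d (u v : 'I_n) : rat := if u == v then 0 else dk (kind_of u) (kind_of v).

Definition G : wgraph n := WGraph (fun u v : 'I_n => adjk (kind_of u) (kind_of v)) d.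

Lemma d_sym u v : d u v = d v u.
Proof. by rewrite /d eq_sym dk_sym. Qed.

Lemma d_ge0 u v : 0 <= d u v.
Proof. rewrite /d; case: eqP => _; [lra| exact: dk_ge0]. Qed.

Lemma d_tri u v w : d u w <= d u v + d v w.
Proof.
rewrite /d; case: (u =P w) => [<-|huw].
  by have := d_ge0 u v; have := d_ge0 v u; rewrite /d eq_sym; case: eqP => _; lra.
case: (u =P v) => [<-|_]; first by rewrite (introF eqP huw); lra.
case: (v =P w) => [<-|_]; first by lra.
exact: dk_tri.
Qed.

Lemma adjk_neq a b : adjk a b -> a <> b.
Proof. by case: a => [||i|i]; case: b => [||j|j] //= _ []. Qed.

Lemma adj_neq u v : adj G u v -> u != v.
Proof. by move=> /adjk_neq h; apply/eqP => e; apply: h; rewrite e. Qed.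

Lemma wf_G : wf_graph G.
Proof.
split => /=.
- by move=> u v; rewrite adjk_sym.
- exact: d_sym.
- by move=> u; apply/negP => /adjk_neq.
- move=> u v h; rewrite /d (negbTE (adj_neq h)); exact: adjk_pos.
Qed.


Lemma mk_valid a b : validk a -> validk b -> validk (mk a b).
Proof. by case: a => [||i|i]; case: b => [||j|j] //=; case: ifP. Qed.

Lemma nd_kind (u w : 'I_n) : u != w -> nd (kind_of u) (kind_of w).
Proof.
move=> huw; case E1: (kind_of u) => [||i|i]; case E2: (kind_of w) => [||j|j] //=.
- by rewrite (kind_eq_vok E1 (or_introl erefl)) (kind_eq_vok E2 (or_introl erefl)) eqxx in huw.
- by rewrite (kind_eq_vok E1 (or_intror (or_introl erefl))) (kind_eq_vok E2 (or_intror (or_introl erefl))) eqxx in huw.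
- apply/eqP => eij; subst j.
  have h1 := kind_eq_vok E1 (or_intror (or_intror (ex_intro _ i erefl))).
  have h2 := kind_eq_vok E2 (or_intror (or_intror (ex_intro _ i erefl))).
  by rewrite h1 h2 eqxx in huw.
Qed.

Definition mid (u w : 'I_n) : 'I_n := vok (mk (kind_of u) (kind_of w)).

Lemma kind_mid u w : kind_of (mid u w) = mk (kind_of u) (kind_of w).
Proof. by rewrite /mid kind_vok // mk_valid // valid_kind. Qed.

Lemma realize (u w : 'I_n) : exists p, walk G u w p /\ plen G u p = d u w.
Proof.
case: (eqVneq u w) => [<-|huw].
  by exists [::]; split => //; rewrite /d eqxx.
case hadj: (adj G u w).
  exists [:: w]; split; last by rewrite /= addr0.
  by split => //=; rewrite andbT; move: hadj => /= ->.
have [h1 h2 h3] := mk_ok (nd_kind huw) (negbT hadj).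
exists [:: mid u w; w]; split.
  by split => //=; rewrite !kind_mid h1 h2.
rewrite /= addr0.
have hm1 : u != mid u w by apply: (@adj_neq u); rewrite /= kind_mid.
have hm2 : mid u w != w by apply: adj_neq; rewrite /= kind_mid.
by rewrite /d (negbTE hm1) (negbTE hm2) (negbTE huw) kind_mid.
Qed.

Lemma plen_ge (u w : 'I_n) p : walk G u w p -> d u w <= plen G u p.
Proof.
elim: p u => [|x p IH] u [/= hp hl].
  by rewrite -hl /d eqxx.
move/andP: hp => [hux hp].
have := IH x (conj hp hl).
have := d_tri u x w.
rewrite /=; lra.
Qed.

Lemma connected_G : connected_graph G.
Proof. by move=> u w; have [p [hp _]] := realize u w; exists p. Qed.

Lemma onspE (u v w : 'I_n) : on_sp G u v w <-> d u v + d v w = d u w.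
Proof.
split.
- case=> p [hp hv hmin].
  have [p1 [p2 [h1 h2 e]]] := walk_split hp hv.
  have [q [hq eq]] := realize u w.
  have := hmin q hq; rewrite e eq.
  have := plen_ge h1; have := plen_ge h2; have := d_tri u v w. lra.
- move=> e.
  have [p1 [h1 e1]] := realize u v.
  have [p2 [h2 e2]] := realize v w.
  exists (p1 ++ p2); split.
  + exact: walk_cat h1 h2.
  + case: h1 => _ <-. by rewrite -cat_cons mem_cat mem_last.
  + move=> q hq; rewrite plen_cat.
    have -> : last u p1 = v by case: h1.
    rewrite e1 e2 e. exact: plen_ge.
Qed.

Lemma onsp_sym u v w : on_sp G u v w -> on_sp G w v u.
Proof. rewrite !onspE !(d_sym w) (d_sym v u). lra. Qed.

Lemma onsp_l u w : on_sp G u u w.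
Proof. rewrite onspE /d eqxx; lra. Qed.

Lemma onsp_r u w : on_sp G u w w.
Proof. rewrite onspE /d eqxx; lra. Qed.


Definition tv : 'I_n := vok KT.
Definition gv : 'I_n := vok KG.
Definition bv j : 'I_n := vok (KB j).

Lemma kind_tv : kind_of tv = KT. Proof. exact: kind_vok. Qed.
Lemma kind_gv : kind_of gv = KG. Proof. exact: kind_vok. Qed.
Lemma kind_bv j : (j < k)%N -> kind_of (bv j) = KB j. Proof. by move=> h; apply: kind_vok. Qed.

Lemma kindT (u : 'I_n) : kind_of u = KT -> u = tv.
Proof. by move=> h; rewrite /tv; apply: (kind_eq_vok h); left. Qed.
Lemma kindG (u : 'I_n) : kind_of u = KG -> u = gv.
Proof. by move=> h; rewrite /gv; apply: (kind_eq_vok h); right; left. Qed.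
Lemma kindB (u : 'I_n) j : kind_of u = KB j -> u = bv j.
Proof. by move=> h; rewrite /bv; apply: (kind_eq_vok h); right; right; exists j. Qed.

Lemma neq_kind (u v : 'I_n) : kind_of u <> kind_of v -> u != v.
Proof. by move=> h; apply/eqP => e; apply: h; rewrite e. Qed.

Lemma dE (u v : 'I_n) : u != v -> d u v = dk (kind_of u) (kind_of v).
Proof. by rewrite /d => /negbTE ->. Qed.

Lemma onsp_int u v w : on_sp G u v w -> u != v -> v != w ->
  u != w /\ dk (kind_of u) (kind_of v) + dk (kind_of v) (kind_of w) = dk (kind_of u) (kind_of w).
Proof.
move=> /onspE e huv hvw; rewrite (dE huv) (dE hvw) in e.
case: (eqVneq u w) => [euw|huw].
  subst w; rewrite /d eqxx in e.
  have := kl_pos (nd_kind huv); have := kl_pos (nd_kind hvw). lra.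
by rewrite (dE huw) in e.
Qed.

Lemma V1 (x y s : 'I_n) j : kind_of x = KC j -> kind_of y = KC j -> x != y ->
  on_sp G x s y -> s = x \/ s = y \/ kind_of s = KB j.
Proof.
move=> hx hy hxy hs.
case: (eqVneq x s) => [->|hxs]; first by left.
case: (eqVneq s y) => [->|hsy]; first by right; left.
have [_ e] := onsp_int hs hxs hsy. rewrite hx hy in e.
by right; right; apply: kl_core_pair.
Qed.

Lemma V2 (u s : 'I_n) i j : (j < k)%N -> kind_of u = KC i -> on_sp G u s (bv j) ->
  s = u \/ s = bv j \/ s = gv.
Proof.
move=> hj hu hs.
case: (eqVneq u s) => [->|hus]; first by left.
case: (eqVneq s (bv j)) => [->|hsb]; first by right; left.
have [_ e] := onsp_int hs hus hsb.
rewrite hu kind_bv // in e.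
right; right; apply: kindG; apply: (kl_core_b e).
by move=> /kindB hs'; rewrite hs' eqxx in hsb.
Qed.

Lemma V3 (u w : 'I_n) : on_sp G u gv w ->
  u = gv \/ w = gv \/ isB (kind_of u) || isB (kind_of w).
Proof.
move=> hs.
case: (eqVneq u gv) => [->|hug]; first by left.
case: (eqVneq gv w) => [->|hgw]; first by right; left.
have [_ e] := onsp_int hs hug hgw.
rewrite kind_gv in e. right; right; apply: (kl_g e).
- by move=> /kindG h; rewrite h eqxx in hug.
- by move=> /kindG h; rewrite h eqxx in hgw.
Qed.

Lemma V4 (u w : 'I_n) j : (j < k)%N -> on_sp G u (bv j) w ->
  u = bv j \/ w = bv j \/ (kind_of u = KC j /\ kind_of w = KC j).
Proof.
move=> hj hs.
case: (eqVneq u (bv j)) => [->|hub]; first by left.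
case: (eqVneq (bv j) w) => [->|hbw]; first by right; left.
have [_ e] := onsp_int hs hub hbw.
rewrite kind_bv // in e. right; right; apply: (kl_b e).
- by move=> /kindB h; rewrite h eqxx in hub.
- by move=> /kindB h; rewrite h eqxx in hbw.
Qed.

Lemma V5 (u v w : 'I_n) j : kind_of v = KC j -> on_sp G u v w ->
  u = v \/ w = v \/ u = tv \/ w = tv.
Proof.
move=> hv hs.
case: (eqVneq u v) => [->|huv]; first by left.
case: (eqVneq v w) => [->|hvw]; first by right; left.
have [_ e] := onsp_int hs huv hvw.
rewrite hv in e. right; right.
by case: (kl_c e) => /kindT ->; [left|right].
Qed.

Lemma P_t (x y : 'I_n) i j : kind_of x = KC i -> kind_of y = KC j -> i != j -> on_sp G x tv y.
Proof.
move=> hx hy hij; apply/onspE.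
have h1 : x != tv by apply: neq_kind; rewrite hx kind_tv.
have h2 : tv != y by apply: neq_kind; rewrite hy kind_tv.
have h3 : x != y by apply: neq_kind; rewrite hx hy => -[e]; rewrite e eqxx in hij.
rewrite (dE h1) (dE h2) (dE h3) hx hy kind_tv /= (negbTE hij).
by clear hx hy hij h1 h2 h3; lra.
Qed.

Lemma P_b (x y : 'I_n) j : (j < k)%N -> kind_of x = KC j -> kind_of y = KC j -> x != y ->
  on_sp G x (bv j) y.
Proof.
move=> hj hx hy hxy; apply/onspE.
have h1 : x != bv j by apply: neq_kind; rewrite hx kind_bv.
have h2 : bv j != y by apply: neq_kind; rewrite hy kind_bv.
rewrite (dE h1) (dE h2) (dE hxy) hx hy kind_bv //= eqxx.
by clear hx hy hxy h1 h2; lra.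
Qed.

Lemma P_g (x : 'I_n) i j : (j < k)%N -> kind_of x = KC i -> i != j -> on_sp G x gv (bv j).
Proof.
move=> hj hx hij; apply/onspE.
have h1 : x != gv by apply: neq_kind; rewrite hx kind_gv.
have h2 : gv != bv j by apply: neq_kind; rewrite kind_gv kind_bv.
have h3 : x != bv j by apply: neq_kind; rewrite hx kind_bv.
rewrite (dE h1) (dE h2) (dE h3) hx kind_gv kind_bv //= eq_sym (negbTE hij).
by clear hx hij h1 h2 h3; lra.
Qed.

Lemma P_gb i j : (i < k)%N -> (j < k)%N -> i != j -> on_sp G (bv i) gv (bv j).
Proof.
move=> hi hj hij; apply/onspE.
have h1 : bv i != gv by apply: neq_kind; rewrite kind_gv kind_bv.
have h2 : gv != bv j by apply: neq_kind; rewrite kind_gv kind_bv.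
have h3 : bv i != bv j by apply: neq_kind; rewrite !kind_bv // => -[e]; rewrite e eqxx in hij.
rewrite (dE h1) (dE h2) (dE h3) kind_gv !kind_bv //= (negbTE hij).
by clear hij h1 h2 h3; lra.
Qed.

Lemma covered_sym L u w : covered G L u w -> covered G L w u.
Proof. by case=> x hx hs; exists x; [rewrite setIC | exact: onsp_sym]. Qed.

Lemma covered_mono (L L' : labeling n) u w : (forall z, L z \subset L' z) ->
  covered G L u w -> covered G L' u w.
Proof.
move=> hL [x hx hs]; exists x => //.
by move: hx; rewrite !inE => /andP [h1 h2]; rewrite (subsetP (hL u)) // (subsetP (hL w)).
Qed.

Lemma in_verts L v u : (u \in cg_verts G L v) <-> exists w, ~ covered G L u w /\ on_sp G u v w.
Proof. by rewrite inE; split => /asboolP. Qed.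

Lemma in_edges L v (p : 'I_n * 'I_n) : (p \in cg_edges G L v) <->
  (p.1 <= p.2)%N /\ (~ covered G L p.1 p.2 /\ on_sp G p.1 v p.2).
Proof. by rewrite inE; split => [/andP [h /asboolP h']|[h h']] //; rewrite h; apply/asboolP. Qed.

Definition Inv (L : labeling n) (S : {set 'I_n}) :=
  (forall u, L u \subset S) /\
  (forall u w, covered G L u w <-> exists2 x, x \in S & on_sp G u x w).

Lemma reach_inv L S : whhl_reach G L S -> Inv L S.
Proof.
elim => [|L0 S0 v hr [IH1 IH2] hnHL hv hmax].
  split => [u|u w]; first by rewrite sub0set.
  split; first by case=> x; rewrite inE in_set0.
  by case=> x; rewrite in_set0.
have hsub : forall z, L0 z \subset whhl_update G L0 v z.
  by move=> z; rewrite /whhl_update; case: ifP => _ //; apply: subsetU1.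
split.
  move=> u; rewrite /whhl_update; case: ifP => _.
  - by apply: setUS.
  - by apply: subset_trans (IH1 u) _; apply: subsetU1.
move=> u w; split.
  case=> x; rewrite inE => /andP [hx _] hs; exists x => //.
  by apply: (subsetP _ _ hx); rewrite /whhl_update; case: ifP => _; [apply: setUS|apply: subset_trans (IH1 u) _; apply: subsetU1].
case=> x; rewrite in_setU1 => /orP [/eqP ->|hx] hs; last first.
  by apply: (covered_mono hsub); apply/IH2; exists x.
case: (pselect (covered G L0 u w)) => hc; first by apply: (covered_mono hsub).
have hu : u \in cg_verts G L0 v by apply/in_verts; exists w.
have hw : w \in cg_verts G L0 v.
  apply/in_verts; exists u; split; last exact: onsp_sym.
  by move/covered_sym.
exists v => //; rewrite inE /whhl_update hu hw !setU11 //.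
Qed.

Lemma size_update L S v : Inv L S -> v \notin S ->
  hl_size (whhl_update G L v) = (hl_size L + #|cg_verts G L v|)%N.
Proof.
move=> [h1 _] hv; rewrite /hl_size /whhl_update -sum1_card [X in _ = (_ + X)%N]big_mkcond -big_split /=.
apply: eq_bigr => u _; case: ifP => _; last by rewrite addn0.
have hn : (v \in L u) = false by apply/negbTE; apply: contra hv; apply: (subsetP (h1 u)).
by rewrite cardsU1 hn addnC.
Qed.

Definition h8 := (8 * k ^ 2)%N.
Lemma m_hh : m = (h8 + h8)%N. Proof. by rewrite hm16 /h8; lia. Qed.
Lemma num1 : (2 * (k + 1) * n < h8 * h8)%N.
Proof. rewrite n_eq hm16 /h8; clear hm16; nia. Qed.
Lemma num2 : (2 * (k + 1) * n + m * m < 2 * (m * m))%N.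
Proof. have := num1; rewrite m_hh; nia. Qed.

Definition cv j r : 'I_n := inord (k.+2 + j * m + r).

Lemma kind_big (i : nat) : (k.+2 <= i)%N -> kind_of i = KC ((i - k.+2) %/ m).
Proof.
move=> hi; rewrite /kind_of.
have -> : (i == 0)%N = false by lia'.
have -> : (i == 1)%N = false by lia'.
by have -> : (i < k.+2)%N = false by lia'.
Qed.

Lemma val_cv j r : (k.+2 + j * m + r < n)%N -> (cv j r : nat) = (k.+2 + j * m + r)%N.
Proof. by move=> h; rewrite /cv inordK. Qed.

Lemma cv_bound j r : (j < k)%N -> (r < m)%N -> (k.+2 + j * m + r < n)%N.
Proof.
move=> hj hr. have : (j * m + m <= k * m)%N.
  have -> : (j * m + m = j.+1 * m)%N by rewrite mulSn addnC.
  by rewrite leq_mul2r hj orbT.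
lia'.
Qed.

Lemma kind_cv j r : (j < k)%N -> (r < m)%N -> kind_of (cv j r) = KC j.
Proof.
move=> hj hr; rewrite val_cv ?cv_bound // kind_big; last by lia'.
have -> : (k.+2 + j * m + r - k.+2 = j * m + r)%N by lia'.
by rewrite divnMDl ?m_gt0 // divn_small // addn0.
Qed.

Lemma cv1_bound b : (b < 2 * m)%N -> (k.+2 + 1 * m + b < n)%N.
Proof. move=> hb. have hm := m_gt0. have : (3 * m <= k * m)%N by rewrite leq_mul2r hk orbT. lia'. Qed.

Lemma kind_cv1 b : (b < 2 * m)%N -> exists j, kind_of (cv 1 b) = KC j /\ (0 < j)%N.
Proof.
move=> hb; rewrite val_cv ?cv1_bound // kind_big; last by lia'.
eexists; split; first by reflexivity.
rewrite divn_gt0 ?m_gt0 //; lia'.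
Qed.

Definition Bset : {set 'I_n} := [set u : 'I_n | isB (kind_of u)].
Definition isCj j (a : kind) : bool := if a is KC l then l == j else false.
Definition Cset j : {set 'I_n} := [set u : 'I_n | isCj j (kind_of u)].

Lemma leq_cardsU (T : finType) (A B : {set T}) : (#|A :|: B| <= #|A| + #|B|)%N.
Proof. by rewrite cardsU leq_subr. Qed.

Lemma B_sub : Bset \subset [set bv (val j) | j : 'I_k].
Proof.
apply/subsetP => u; rewrite inE.
have := valid_kind u.
case E: (kind_of u) => [||j|j] //= hj _.
by apply/imsetP; exists (Ordinal hj) => //; apply: kindB.
Qed.

Lemma card_B_le : (#|Bset| <= k)%N.
Proof.
apply: leq_trans (subset_leq_card B_sub) _.
by apply: leq_trans (leq_imset_card _ _) _; rewrite ?cardsT card_ord.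
Qed.

Lemma val_bv j : (j < k)%N -> (bv j : nat) = j.+2.
Proof. by move=> h; rewrite /bv /= inordK //; lia'. Qed.

Lemma card_B_ge : (k <= #|Bset|)%N.
Proof.
have hinj : injective (fun j : 'I_k => bv (val j)).
  move=> i j /(congr1 (@nat_of_ord n)); rewrite !val_bv ?ltn_ord // => e; apply: val_inj; lia.
have e := card_imset (mem 'I_k) hinj. rewrite card_ord in e.
rewrite -[X in (X <= _)%N]e.
apply: subset_leq_card; apply/subsetP => u /imsetP [j _ ->].
by rewrite inE kind_bv ?ltn_ord.
Qed.

Lemma C_sub j : Cset j \subset [set cv j (val r) | r : 'I_m].
Proof.
apply/subsetP => u; rewrite inE.
case E: (kind_of u) => [||l|l] //= /eqP hl; subst l.
have hu : (k.+2 <= u)%N.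
  move: E; rewrite /kind_of; case: ifP => // h0; case: ifP => // h1; case: ifP => //; lia'.
have hm := m_gt0.
apply/imsetP; exists (Ordinal (ltn_pmod (u - k.+2) hm)) => //=.
apply: val_inj => /=.
have hj : j = ((u - k.+2) %/ m)%N by rewrite kind_big // in E; case: E.
have hv : (k.+2 + j * m + (u - k.+2) %% m)%N = u.
  by rewrite hj -addnA -divn_eq; lia'.
by rewrite val_cv hv // ltn_ord.
Qed.

Lemma card_C_le j : (#|Cset j| <= m)%N.
Proof.
apply: leq_trans (subset_leq_card (C_sub j)) _.
by apply: leq_trans (leq_imset_card _ _) _; rewrite ?cardsT card_ord.
Qed.

Lemma edges_in_verts L v (p : 'I_n * 'I_n) : p \in cg_edges G L v ->
  p.1 \in cg_verts G L v /\ p.2 \in cg_verts G L v.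
Proof.
move/in_edges => [_ [hc hs]]; split; apply/in_verts.
- by exists p.2.
- exists p.1; split; last exact: onsp_sym.
  by move/covered_sym.
Qed.

Lemma card_edges_le L v (A : {set 'I_n}) (Q : {set 'I_n * 'I_n}) :
  (forall p, p \in cg_edges G L v -> [\/ p.1 \in A, p.2 \in A | p \in Q]) ->
  (#|cg_edges G L v| <= 2 * #|A| * #|cg_verts G L v| + #|Q|)%N.
Proof.
move=> h; set V := cg_verts G L v.
have hsub : cg_edges G L v \subset (setX A V :|: setX V A) :|: Q.
  apply/subsetP => -[a b] hp; have [/= h1 h2] := edges_in_verts hp.
  rewrite !in_setU !in_setX; case: (h _ hp) => /= [hA|hA|hQ]; by rewrite ?hA ?h1 ?h2 ?hQ ?orbT.
apply: leq_trans (subset_leq_card hsub) _.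
apply: leq_trans (leq_cardsU _ _) _.
apply: leq_trans (leq_add (leq_cardsU _ _) (leqnn _)) _.
by rewrite !cardsX (mulnC #|V|) -mulnA mul2n -addnn.
Qed.

Lemma verts_le L v : (#|cg_verts G L v| <= n)%N.
Proof. by apply: leq_trans (max_card _) _; rewrite card_ord. Qed.

Lemma verts_pos L v : (0 < #|cg_edges G L v|)%N -> (0 < #|cg_verts G L v|)%N.
Proof.
case/card_gt0P => p hp; apply/card_gt0P; exists p.1.
by have [] := edges_in_verts hp.
Qed.

Lemma dens_cmp (E1 V1 E2 V2 : nat) : (0 < V1)%N -> (0 < V2)%N -> (E1 * V2 < E2 * V1)%N ->
  (E1%:R / V1%:R < E2%:R / V2%:R :> rat).
Proof.
move=> h1 h2 h; rewrite ltr_pdivrMr ?ltr0n // mulrAC ltr_pdivlMr ?ltr0n //.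
by rewrite -!natrM ltr_nat.
Qed.

Lemma dens_ge0 L v : 0 <= cg_density G L v.
Proof. by rewrite /cg_density divr_ge0 // ler0n. Qed.

Lemma dens_V0 L v : #|cg_verts G L v| = 0%N -> cg_density G L v = 0.
Proof. by move=> h; rewrite /cg_density h invr0 mulr0. Qed.

Lemma uncov_init L u w : Inv L set0 -> ~ covered G L u w.
Proof. by move=> [_ hI] /hI [x]; rewrite in_set0. Qed.

Lemma init_verts L v : Inv L set0 -> cg_verts G L v = setT.
Proof.
move=> hI; apply/setP => u; rewrite in_setT; apply/in_verts.
by exists v; split; [apply: uncov_init | apply: onsp_r].
Qed.

Lemma init_t_edges L : Inv L set0 -> (2 * (m * m) <= #|cg_edges G L tv|)%N.
Proof.
move=> hI.
pose f := fun ab : 'I_m * 'I_(2 * m) => (cv 0 ab.1, cv 1 ab.2).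
have hm := m_gt0.
have hinj : injective f.
  move=> [a b] [a' b'] [] /(congr1 (@nat_of_ord n)) e1 /(congr1 (@nat_of_ord n)) e2.
  move: e1 e2; rewrite !val_cv; try (apply: cv_bound => //; lia'); try (apply: cv1_bound => //).
  by move=> e1 e2; congr pair; apply: val_inj => /=; lia'.
have e := card_imset (mem [set: 'I_m * 'I_(2 * m)]) hinj.
rewrite cardsT card_prod !card_ord in e.
have -> : (2 * (m * m) = m * (2 * m))%N by lia'.
rewrite -e; apply: subset_leq_card; apply/subsetP => p /imsetP [[a b] _ ->].
apply/in_edges => /=; split.
  rewrite !val_cv; try (apply: cv_bound => //; lia'); try (apply: cv1_bound => //). have := ltn_ord a. lia'.
split; first exact: uncov_init.
have [j [hj hj0]] := kind_cv1 (ltn_ord b).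
apply: (@P_t _ _ 0 j) => //; first by rewrite kind_cv //; lia'.
by rewrite eq_sym -lt0n.
Qed.

Lemma Bset_kind u : u \in Bset -> exists j, (j < k)%N /\ u = bv j.
Proof.
rewrite inE; have := valid_kind u.
case E: (kind_of u) => [||j|j] //= hj _; exists j; split => //; exact: kindB.
Qed.

Lemma init_other_edges L v : Inv L set0 -> v != tv ->
  (#|cg_edges G L v| <= 2 * (k + 1) * n + m * m)%N.
Proof.
move=> hI hv.
have hV : #|cg_verts G L v| = n by rewrite init_verts // cardsT card_ord.
have := valid_kind v.
case E: (kind_of v) => [||j|j] /= hj.
- by rewrite (kindT E) eqxx in hv.
- rewrite (kindG E).
  apply: (@leq_trans (2 * #|gv |: Bset| * #|cg_verts G L gv| + #|(set0 : {set 'I_n * 'I_n})|)%N).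
    apply: card_edges_le => p /in_edges [_ [_ hs]].
    case: (V3 hs) => [->|[->|/orP [hB|hB]]]; rewrite !inE ?eqxx ?hB ?orbT; by [constructor 1|constructor 2|idtac].
  rewrite cards0 addn0 (@init_verts L gv hI) cardsT card_ord.
  have : (#|gv |: Bset| <= k + 1)%N.
    by apply: leq_trans (leq_cardsU _ _) _; rewrite cards1 add1n addn1 ltnS card_B_le.
  nia'.
- rewrite (kindB E).
  apply: (@leq_trans (2 * #|[set bv j]| * #|cg_verts G L (bv j)| + #|setX (Cset j) (Cset j)|)%N).
    apply: card_edges_le => p /in_edges [_ [_ hs]].
    case: (V4 hj hs) => [->|[->|[h1 h2]]]; rewrite !inE ?eqxx.
    + by constructor 1.
    + by constructor 2.
    + by constructor 3; rewrite h1 h2 /= !eqxx.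
  rewrite (@init_verts L (bv j) hI) cardsT card_ord cards1 cardsX.
  have := card_C_le j. nia'.
- apply: (@leq_trans (2 * #|[set v; tv]| * #|cg_verts G L v| + #|(set0 : {set 'I_n * 'I_n})|)%N).
    apply: card_edges_le => p /in_edges [_ [_ hs]].
    case: (V5 E hs) => [->|[->|[->|->]]]; rewrite !inE ?eqxx ?orbT; by [constructor 1|constructor 2].
  rewrite cards0 addn0 hV.
  have : (#|[set v; tv]| <= 2)%N by apply: leq_trans (leq_cardsU _ _) _; rewrite !cards1.
  nia'.
Qed.

Lemma n_pos : (0 < n)%N. Proof. by rewrite n_eq. Qed.

Lemma init_pick L v : Inv L set0 ->
  (forall v', v' \notin set0 -> cg_density G L v' <= cg_density G L v) -> v = tv.
Proof.
move=> hI hmax; case: (eqVneq v tv) => // hv; exfalso.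
have := hmax tv; rewrite in_set0 => /(_ isT).
suff lt : cg_density G L v < cg_density G L tv by rewrite leNgt lt.
rewrite /cg_density !init_verts // cardsT card_ord.
apply: dens_cmp; rewrite ?n_pos // ltn_pmul2r ?n_pos //.
apply: leq_trans (init_t_edges hI).
apply: leq_ltn_trans (init_other_edges hI hv) _.
exact: num2.
Qed.

Definition Ph1 (S : {set 'I_n}) := tv \in S /\ forall s, s \in S -> s = tv \/ isB (kind_of s).

Lemma ph1_notin_core S (u : 'I_n) j : Ph1 S -> kind_of u = KC j -> u \notin S.
Proof.
move=> [_ hS] hu; apply/negP => /hS [e|]; last by rewrite hu.
by move: hu; rewrite e kind_tv.
Qed.

Lemma ph1_notin_g S : Ph1 S -> gv \notin S.
Proof.
move=> [_ hS]; apply/negP => /hS [e|]; last by rewrite kind_gv.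
by move: (kind_gv); rewrite e kind_tv.
Qed.

Lemma covered_by L S u w x : Inv L S -> x \in S -> on_sp G u x w -> covered G L u w.
Proof. by move=> [_ hI] hx hs; apply/hI; exists x. Qed.

Lemma ph1_b_edges L S j : Inv L S -> Ph1 S -> (j < k)%N -> bv j \notin S ->
  (h8 * h8 <= #|cg_edges G L (bv j)|)%N.
Proof.
move=> hI hP hj hb.
have hm := m_gt0. have hmh := m_hh.
pose f := fun ab : 'I_h8 * 'I_h8 => (cv j ab.1, cv j (h8 + ab.2)).
have vx (a : 'I_h8) : (cv j a : nat) = (k.+2 + j * m + a)%N.
  by rewrite val_cv // cv_bound //; have := ltn_ord a; lia'.
have vy (b : 'I_h8) : (cv j (h8 + b) : nat) = (k.+2 + j * m + (h8 + b))%N.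
  by rewrite val_cv // cv_bound //; have := ltn_ord b; lia'.
have kx (a : 'I_h8) : kind_of (cv j a) = KC j by rewrite kind_cv //; have := ltn_ord a; lia'.
have ky (b : 'I_h8) : kind_of (cv j (h8 + b)) = KC j by rewrite kind_cv //; have := ltn_ord b; lia'.
have hinj : injective f.
  move=> [a b] [a' b'] [] /(congr1 (@nat_of_ord n)) e1 /(congr1 (@nat_of_ord n)) e2.
  move: e1 e2; rewrite !vx !vy => e1 e2.
  by congr pair; apply: val_inj => /=; lia'.
have e := card_imset (mem [set: 'I_h8 * 'I_h8]) hinj.
rewrite cardsT card_prod !card_ord in e.
rewrite -e; apply: subset_leq_card; apply/subsetP => p /imsetP [[a b] _ ->].
have hxy : cv j a != cv j (h8 + b).
  apply/eqP => /(congr1 (@nat_of_ord n)); rewrite vx vy; have := ltn_ord a; lia'.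
apply/in_edges => /=; split.
  rewrite vx vy; have := ltn_ord a; lia'.
split; last exact: P_b.
move=> /(proj2 hI) [s hs hsp].
case: (V1 (kx a) (ky b) hxy hsp) => [e'|[e'|hk']].
- by move: hs; rewrite e' (negbTE (ph1_notin_core hP (kx a))).
- by move: hs; rewrite e' (negbTE (ph1_notin_core hP (ky b))).
- by move: hs; rewrite (kindB hk') (negbTE hb).
Qed.

Lemma ph1_other L S v : Inv L S -> Ph1 S -> v \notin S -> ~~ isB (kind_of v) ->
  (#|cg_edges G L v| <= 2 * (k + 1) * #|cg_verts G L v|)%N.
Proof.
move=> hI hP hv hnB.
case E: (kind_of v) hnB => [||j|j] //= _.
- by move: hv; rewrite (kindT E) hP.1.
- rewrite (kindG E).
  apply: (@leq_trans (2 * #|gv |: Bset| * #|cg_verts G L gv| + #|(set0 : {set 'I_n * 'I_n})|)%N).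
    apply: card_edges_le => p /in_edges [_ [_ hs]].
    case: (V3 hs) => [->|[->|/orP [hB|hB]]]; rewrite !inE ?eqxx ?hB ?orbT; by [constructor 1|constructor 2|idtac].
  rewrite cards0 addn0.
  have : (#|gv |: Bset| <= k + 1)%N.
    by apply: leq_trans (leq_cardsU _ _) _; rewrite cards1 add1n addn1 ltnS card_B_le.
  by move=> h; rewrite leq_mul2r leq_mul2l h !orbT.
- apply: (@leq_trans (2 * #|[set v]| * #|cg_verts G L v| + #|(set0 : {set 'I_n * 'I_n})|)%N).
    apply: card_edges_le => p /in_edges [_ [hc hs]].
    case: (V5 E hs) => [->|[->|[e1|e1]]]; rewrite ?inE ?eqxx; try by [constructor 1|constructor 2].
    + by exfalso; apply: hc; apply: (covered_by hI hP.1); rewrite e1; apply: onsp_l.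
    + by exfalso; apply: hc; apply: (covered_by hI hP.1); rewrite e1; apply: onsp_r.
  rewrite cards0 addn0 cards1 muln1.
  by rewrite leq_mul2r; apply/orP; right; lia'.
Qed.

Lemma ph1_verts_b L S j : Inv L S -> Ph1 S -> (j < k)%N -> bv j \notin S ->
  (k * m <= #|cg_verts G L (bv j)|)%N.
Proof.
move=> hI hP hj hb.
pose f := fun ab : 'I_k * 'I_m => cv ab.1 ab.2.
have vf (a : 'I_k) (b : 'I_m) : (cv a b : nat) = (k.+2 + a * m + b)%N by rewrite val_cv // cv_bound.
have hinj : injective f.
  move=> [a b] [a' b'] /(congr1 (@nat_of_ord n)); rewrite /f /= !vf => e1.
  have hb1 := ltn_ord b. have hb2 := ltn_ord b'.
  have ea : (a : nat) = a'.
    have e2 : (a * m + b = a' * m + b')%N by lia'.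
    have := congr1 (fun x => x %/ m)%N e2.
    by rewrite /= !divnMDl ?m_gt0 // !divn_small // !addn0.
  have eb : (b : nat) = b' by move: e1; rewrite ea; lia'.
  by congr pair; apply: val_inj.
have e := card_imset (mem [set: 'I_k * 'I_m]) hinj.
rewrite cardsT card_prod !card_ord in e.
rewrite -e; apply: subset_leq_card; apply/subsetP => u /imsetP [[a b] _ ->].
apply/in_verts; exists (bv j); split; last exact: onsp_r.
move=> /(proj2 hI) [s hs hsp].
have hk' : kind_of (f (a, b)) = KC a by rewrite /f kind_cv.
case: (V2 hj hk' hsp) => [e'|[e'|e']].
- by move: hs; rewrite e' (negbTE (ph1_notin_core hP hk')).
- by move: hs; rewrite e' (negbTE hb).
- by move: hs; rewrite e' (negbTE (ph1_notin_g hP)).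
Qed.

Lemma ph1_pick L S v j : Inv L S -> Ph1 S -> (j < k)%N -> bv j \notin S -> v \notin S ->
  cg_density G L (bv j) <= cg_density G L v -> isB (kind_of v).
Proof.
move=> hI hP hj hb hv hle; apply/negPn/negP => hnB.
have hEb := ph1_b_edges hI hP hj hb.
have hEpos : (0 < #|cg_edges G L (bv j)|)%N.
  apply: leq_trans hEb; rewrite muln_gt0 /h8 muln_gt0 expn_gt0 andbb; lia'.
have hVb := verts_pos hEpos.
suff lt : cg_density G L v < cg_density G L (bv j) by move: hle; rewrite leNgt lt.
case hV0: (#|cg_verts G L v| == 0)%N.
  rewrite dens_V0; last by apply/eqP.
  by rewrite /cg_density divr_gt0 // ltr0n.
rewrite /cg_density; apply: dens_cmp => //; first by rewrite lt0n hV0.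
apply: (arith_pick (ph1_other hI hP hv hnB) (verts_le _ _) hEb num1).
by rewrite lt0n hV0.
Qed.

Lemma Ph1_tv_notB : ~~ isB (kind_of tv). Proof. by rewrite kind_tv. Qed.

Lemma phase L S : whhl_reach G L S ->
  [\/ S = set0, Ph1 S /\ (#|S :&: Bset| * (k * m) <= hl_size L)%N
    | Bset \subset S /\ (#|Bset| * (k * m) <= hl_size L)%N].
Proof.
elim => [|L0 S0 v hr IH hnHL hv hmax]; first by constructor 1.
have hI := reach_inv hr.
have hsz := size_update hI hv.
case: IH => [eS|[hP hs]|[hB hs]].
- subst S0. have ev := init_pick hI hmax. subst v.
  constructor 2; split.
  + split; first by rewrite setU11.
    by move=> s; rewrite in_setU1 in_set0 orbF => /eqP ->; left.
  + have -> : (tv |: set0) :&: Bset = set0.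
      apply/setP => x; rewrite !inE; case: eqP => // ->; by rewrite kind_tv.
    by rewrite cards0.
- case: (boolP (Bset \subset S0)) => hBS.
  + constructor 3; split; first by apply: subset_trans hBS (subsetU1 _ _).
    rewrite hsz; apply: leq_trans (leq_addr _ _).
    by rewrite (setIidPr hBS) in hs.
  + case/subsetPn: hBS => b hb hnb.
    have [j [hj eb]] := Bset_kind hb. subst b.
    have hvB := ph1_pick hI hP hj hnb hv (hmax _ hnb).
    have hvB' : v \in Bset by rewrite inE.
    have [j' [hj' ev]] := Bset_kind hvB'.
    constructor 2; split.
    * split; first by rewrite in_setU1 hP.1 orbT.
      move=> s; rewrite in_setU1 => /orP [/eqP ->|/hP.2 //]; by right.
    * have -> : (v |: S0) :&: Bset = v |: (S0 :&: Bset).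
        by rewrite setIUl (setIidPl _) // sub1set.
      rewrite cardsU1 inE (negbTE hv) /= add1n mulSn hsz addnC.
      apply: leq_add => //.
      have hv' : bv j' \notin S0 by rewrite -ev.
      rewrite ev; exact: ph1_verts_b hI hP hj' hv'.
- constructor 3; split; first by apply: subset_trans hB (subsetU1 _ _).
  by rewrite hsz; apply: leq_trans (leq_addr _ _).
Qed.

Lemma output_size L : whhl_output G L -> (k * (k * m) <= hl_size L)%N.
Proof.
case=> S [hr hHL].
have hI := reach_inv hr.
case: (phase hr) => [eS|[hP hs]|[hB hs]].
- by exfalso; subst S; have := hHL tv tv; move/(proj2 hI) => [x]; rewrite in_set0.
- case: (boolP (Bset \subset S)) => hBS.
    rewrite (setIidPr hBS) in hs; apply: leq_trans hs.
    by rewrite leq_mul2r card_B_ge orbT.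
  exfalso; case/subsetPn: hBS => b hb hnb.
  have [j [hj eb]] := Bset_kind hb. subst b.
  have hm := m_gt0. have hm2 : (1 < m)%N by rewrite hm16; clear hm16; nia.
  have k0 : kind_of (cv j 0) = KC j by rewrite kind_cv.
  have k1 : kind_of (cv j 1) = KC j by rewrite kind_cv.
  have hxy : cv j 0 != cv j 1.
    apply/eqP => /(congr1 (@nat_of_ord n)); rewrite !val_cv ?cv_bound //; lia'.
  have := hHL (cv j 0) (cv j 1); move/(proj2 hI) => [s hs' hsp].
  case: (V1 k0 k1 hxy hsp) => [e'|[e'|hk']].
  + by move: hs'; rewrite e' (negbTE (ph1_notin_core hP k0)).
  + by move: hs'; rewrite e' (negbTE (ph1_notin_core hP k1)).
  + by move: hs'; rewrite (kindB hk') (negbTE hnb).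
- by apply: leq_trans hs; rewrite leq_mul2r card_B_ge orbT.
Qed.

Lemma HL_full L S : Inv L S -> (forall u, u \in S) -> is_HL G L.
Proof. by move=> hI hS u w; apply: (covered_by hI (hS u)); apply: onsp_l. Qed.

Lemma out_exists : exists L, whhl_output G L.
Proof.
suff H : forall r L S, whhl_reach G L S -> (n - #|S| <= r)%N -> exists L', whhl_output G L'.
  by apply: (H n _ _ (whhl_start G)); rewrite cards0 subn0.
elim=> [|r IH] L S hr hr'.
- exists L, S; split => //; apply: (HL_full (reach_inv hr)) => u.
  have -> : S = setT by apply/eqP; rewrite eqEcard subsetT cardsT card_ord; lia'.
  by rewrite in_setT.
- case: (pselect (is_HL G L)) => hHL; first by exists L, S.
  have [v0 hv0] : exists v0, v0 \notin S.
    case: (pselect (exists v0, v0 \notin S)) => // hno; exfalso; apply: hHL.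
    apply: (HL_full (reach_inv hr)) => u; apply/negPn/negP => hu; apply: hno; by exists u.
  have [v [hv hmax]] := @exists_max _ (fun x => x \notin S) (cg_density G L) v0 hv0.
  apply: (IH _ _ (whhl_step hr hHL hv hmax)).
  rewrite cardsU1 hv; lia'.
Qed.

Definition Lopt : labeling n := fun u =>
  match kind_of u with
  | KT => [set tv] | KG => [set gv; tv] | KB _ => [set u; tv; gv]
  | KC j => [set u; tv; gv; bv j] end.

Lemma Lopt_self (u : 'I_n) : u \in Lopt u.
Proof.
rewrite /Lopt; case E: (kind_of u) => [||j|j]; rewrite !inE ?eqxx ?orbT //.
- by rewrite (kindT E) eqxx.
- by rewrite (kindG E) eqxx.
Qed.

Lemma Lopt_t (u : 'I_n) : tv \in Lopt u.
Proof. by rewrite /Lopt; case: (kind_of u) => [||j|j]; rewrite !inE eqxx ?orbT. Qed.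

Lemma Lopt_g (u : 'I_n) : u != tv -> gv \in Lopt u.
Proof.
move=> hu; rewrite /Lopt; case E: (kind_of u) => [||j|j]; rewrite !inE ?eqxx ?orbT //.
by rewrite (kindT E) eqxx in hu.
Qed.

Lemma Lopt_b (u : 'I_n) j : kind_of u = KC j -> bv j \in Lopt u.
Proof. by move=> E; rewrite /Lopt E !inE eqxx ?orbT. Qed.

Lemma Lopt_size : (hl_size Lopt <= 4 * n)%N.
Proof.
rewrite /hl_size.
apply: leq_trans (_ : (\sum_(v : 'I_n) 4 <= _)%N); last by rewrite sum_nat_const card_ord mulnC.
apply: leq_sum => u _.
pose x := if kind_of u is KC j then bv j else tv.
apply: leq_trans (card_size [:: u; tv; gv; x]).
apply: subset_leq_card; apply/subsetP => y.
rewrite /Lopt /x; case: (kind_of u) => [||j|j]; rewrite !inE;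
  by repeat case/orP; move=> /eqP ->; rewrite ?eqxx ?orbT.
Qed.

Lemma cov_via (u w x : 'I_n) : x \in Lopt u -> x \in Lopt w -> on_sp G u x w -> covered G Lopt u w.
Proof. by move=> h1 h2 hs; exists x => //; rewrite inE h1 h2. Qed.

Lemma Lopt_HL : is_HL G Lopt.
Proof.
move=> u w.
case: (eqVneq u w) => [<-|huw]; first by apply: (cov_via (Lopt_self u) (Lopt_self u)); apply: onsp_l.
case: (eqVneq u tv) => [->|hut]; first by apply: (cov_via (Lopt_t _) (Lopt_t _)); apply: onsp_l.
case: (eqVneq w tv) => [->|hwt]; first by apply: (cov_via (Lopt_t _) (Lopt_t _)); apply: onsp_r.
case: (eqVneq u gv) => [->|hug].
  by apply: (cov_via (Lopt_self _) (Lopt_g hwt)); apply: onsp_l.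
case: (eqVneq w gv) => [->|hwg].
  by apply: (cov_via (Lopt_g hut) (Lopt_self _)); apply: onsp_r.
have vu := valid_kind u. have vw := valid_kind w.
case Eu: (kind_of u) vu => [||i|i] /= hi.
- by rewrite (kindT Eu) eqxx in hut.
- by rewrite (kindG Eu) eqxx in hug.
- case Ew: (kind_of w) vw => [||j|j] /= hj.
  + by rewrite (kindT Ew) eqxx in hwt.
  + by rewrite (kindG Ew) eqxx in hwg.
  + apply: (cov_via (Lopt_g hut) (Lopt_g hwt)).
    rewrite (kindB Eu) (kindB Ew); apply: P_gb => //.
    by apply/eqP => eij; subst j; rewrite (kindB Eu) (kindB Ew) eqxx in huw.
  + case: (eqVneq i j) => [eij|nij].
    * subst j; apply: (cov_via (Lopt_self u) _ (onsp_l _ _)).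
      by rewrite (kindB Eu); apply: Lopt_b.
    * apply: (cov_via (Lopt_g hut) (Lopt_g hwt)).
      rewrite (kindB Eu); apply: onsp_sym; apply: (P_g hi Ew).
      by rewrite eq_sym.
- case Ew: (kind_of w) vw => [||j|j] /= hj.
  + by rewrite (kindT Ew) eqxx in hwt.
  + by rewrite (kindG Ew) eqxx in hwg.
  + case: (eqVneq i j) => [eij|nij].
    * subst j; apply: (cov_via _ (Lopt_self w) (onsp_r _ _)).
      by rewrite (kindB Ew); apply: Lopt_b.
    * apply: (cov_via (Lopt_g hut) (Lopt_g hwt)).
      by rewrite (kindB Ew); apply: (P_g hj Eu).
  + case: (eqVneq i j) => [eij|nij].
    * subst j; apply: (cov_via (Lopt_b Eu) (Lopt_b Ew)).
      exact: P_b.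
    * apply: (cov_via (Lopt_t _) (Lopt_t _)).
      exact: (P_t Eu Ew).
Qed.

Lemma Lopt_order (u v : 'I_n) : u \in Lopt v -> (u <= v)%N.
Proof.
have hvt : (tv : nat) = 0%N by rewrite /tv /vok /= inordK.
have hvg : (gv : nat) = 1%N by rewrite /gv /vok /= inordK.
rewrite /Lopt; case E: (kind_of v) => [||j|j]; rewrite !inE.
- by move=> /eqP ->; rewrite (kindT E).
- by move/orP => [h|h]; move/eqP: h => ->; rewrite (kindG E) ?hvt ?hvg.
- have hv2 : (2 <= v)%N by move: E; rewrite /kind_of; case: ifP => //; case: ifP => //; lia'.
  by move/orP => [/orP [h|h]|h]; move/eqP: h => ->; rewrite ?hvt ?hvg; lia'.
- have hv2 : (k.+2 <= v)%N.
    by move: E; rewrite /kind_of; case: ifP => //; case: ifP => //; case: ifP => //; lia'.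
  have hj := valid_kind v; rewrite E /= in hj.
  move/orP => [/orP [/orP [h|h]|h]|h]; move/eqP: h => ->; rewrite ?hvt ?hvg //; try lia'.
  rewrite val_bv //; lia'.
Qed.

Lemma Lopt_HHL : is_HHL G Lopt.
Proof.
split; first exact: Lopt_HL.
exists id; split; first by exists id.
exact: Lopt_order.
Qed.

End Construction.

Lemma final_arith (x y : nat) : (x <= 100 * y)%N -> (100%:R^-1 : rat) * x%:R <= y%:R.
Proof.
move=> h. have : (x%:R <= (100 * y)%N%:R :> rat) by rewrite ler_nat.
rewrite natrM => h'. by rewrite ler_pdivrMl ?ltr0n.
Qed.

Lemma final_nat (k nn s : nat) : (2 <= k)%N -> (nn <= 17 * k ^ 3)%N -> (16 * k ^ 4 <= s)%N ->
  (nn ^ 4 <= 100 * s ^ 3)%N.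
Proof.
move=> hk hn hs.
have h1 : (nn ^ 4 <= (17 * k ^ 3) ^ 4)%N by rewrite leq_exp2r.
have h2 : ((16 * k ^ 4) ^ 3 <= s ^ 3)%N by rewrite leq_exp2r.
rewrite expnMn -expnM in h1. rewrite expnMn -expnM in h2.
move: h1 h2.
have -> : (4 * 3 = 12)%N by []. have -> : (3 * 4 = 12)%N by [].
move: (k ^ 12)%N => K. move=> h1 h2.
have e1 : (17 ^ 4 = 83521)%N by []. have e2 : (16 ^ 3 = 4096)%N by [].
rewrite e1 e2 in h1 h2. lia.
Qed.

Theorem mainTheorem9 :
  exists (c C : rat), 0 < c /\
  forall N : nat, exists (n : nat) (G : wgraph n),
    [/\ (N <= n)%N, wf_graph G, connected_graph G,
        (exists L, is_HHL G L /\ (hl_size L)%:R <= C * n%:R) &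
        (exists L, whhl_output G L)] /\
        forall L, whhl_output G L -> c * n%:R ^+ 4 <= (hl_size L)%:R ^+ 3.
Proof.
exists (100%:R^-1), 4%:R; split; first by rewrite invr_gt0 ltr0n.
move=> N.
pose k := (N + 3)%N. pose m := (16 * k ^ 2)%N.
have hk : (3 <= k)%N by rewrite /k; lia.
have hm : m = (16 * k ^ 2)%N by [].
exists (n k m), (G k m); split.
  split.
  - rewrite /n /k; lia.
  - exact: wf_G.
  - exact: connected_G.
  - exists (@Lopt k m); split; first exact: Lopt_HHL.
    rewrite -natrM ler_nat. exact: Lopt_size.
  - exact: out_exists.
move=> L hL.
have hs := output_size hk hm hL.
rewrite -!natrX; apply: final_arith.
apply: (@final_nat k); first by lia.
- rewrite /n hm. have : ((k + k * (16 * k ^ 2)).+2 <= 17 * k ^ 3)%N by nia. by [].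
- apply: leq_trans hs. rewrite hm; nia.
Qed.
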